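(* Let $K$ be an imaginary quadratic field, let $N=N_0N_1^2$ and $c$ be positive integers with $(c,N)=1$, and fix an embedding $K\hookrightarrow M_2(\mathbb{Q})$ with $K\cap M_2(\mathbb{Z})=K\cap R_0(N_0)=\mathcal{O}_c$. Let $h_0\in K$ be the point of the upper half plane fixed by $K^\times$. Let $\mathfrak{a}=\mathbb{Z}+\mathbb{Z}h_0^{-1}$ and $\mathcal{N}^{-1}=\mathbb{Z}+\mathbb{Z}N_0^{-1}h_0^{-1}$. Then $\mathrm{End}(\mathfrak{a}):=\{x\in K: x\mathfrak{a}\subset\mathfrak{a}\}=\mathcal{O}_c$ and $\mathrm{End}(\mathcal{N}^{-1})=\mathcal{O}_c$.
   Context: $\mathcal{O}_c=\mathbb{Z}+c\mathcal{O}_K$; $R_0(N_0)=\{A\in M_2(\mathbb{Z}): A\equiv\begin{pmatrix}*&*\\0&*\end{pmatrix}\pmod{N_0}\}$. Here $h_0$ lies in $K$ (viewed as a subfield of $\mathbb{C}$) and $K=\mathbb{Q}+\mathbb{Q}h_0$. *)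

(* Defs.v *)
From HB Require Import structures.
From mathcomp Require Import all_boot all_order all_algebra all_field.
Set Implicit Arguments. Unset Strict Implicit. Unset Printing Implicit Defensive.
Import Order.TTheory GRing.Theory Num.Theory.
Local Open Scope ring_scope.

(* The imaginary quadratic field K = Q(w) = Q + Q w, where w^2 = -D with D > 0
   rational; membership predicate on algC. *)
Definition inK (w : algC) (x : algC) : Prop :=
  exists a b : rat, x = ratr a + ratr b * w.

Definition inOK (w : algC) (x : algC) : Prop := inK w x /\ x \in Aint.

Definition inOc (w : algC) (c : nat) (x : algC) : Prop :=
  exists (m : int) (y : algC), inOK w y /\ x = m%:~R + c%:R * y.

(* iota : K -> M_2(Q) is a ring embedding (unital, additive, multiplicative on K;
   Q-linearity and injectivity follow since K is a field). *)
Definition is_embedding (w : algC) (iota : algC -> 'M[rat]_2) : Prop :=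
  iota 1 = 1%:M /\
  (forall x y, inK w x -> inK w y -> iota (x + y) = iota x + iota y) /\
  (forall x y, inK w x -> inK w y -> iota (x * y) = iota x *m iota y).

Definition mxa (g : 'M[rat]_2) := g ord0 ord0.
Definition mxb (g : 'M[rat]_2) := g ord0 ord_max.
Definition mxc (g : 'M[rat]_2) := g ord_max ord0.
Definition mxd (g : 'M[rat]_2) := g ord_max ord_max.

Definition moebius_fixes (g : 'M[rat]_2) (z : algC) : Prop :=
  ratr (mxc g) * z + ratr (mxd g) != 0 /\
  (ratr (mxa g) * z + ratr (mxb g)) / (ratr (mxc g) * z + ratr (mxd g)) = z.

Definition int_mx (g : 'M[rat]_2) : Prop := forall i j, g i j \is a Num.int.
Definition inR0 (N0 : nat) (g : 'M[rat]_2) : Prop :=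
  int_mx g /\ exists k : int, mxc g = (N0%:Z * k)%:~R.

(* The lattices  a = Z + Z h^{-1}  and  N^{-1} = Z + Z N0^{-1} h^{-1}. *)
Definition in_lat (u v : algC) (x : algC) : Prop :=
  exists m n : int, x = m%:~R * u + n%:~R * v.

Definition inEnd (w : algC) (L : algC -> Prop) (x : algC) : Prop :=
  inK w x /\ forall y, L y -> L (x * y).

(* Main.v *)
Require Import Defs.
From HB Require Import structures.
From mathcomp Require Import all_boot all_order all_algebra all_field.
From mathcomp Require Import ring lra.
Import Order.TTheory GRing.Theory Num.Theory.
Set Implicit Arguments. Unset Strict Implicit.
Local Open Scope ring_scope.

Lemma coord0 (D : rat) (hD : 0 < D) (w : algC) (hw : w ^+ 2 = - ratr D)
  (a b : rat) : ratr a + ratr b * w = 0 -> a = 0 /\ b = 0.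
Proof.
move=> H.
have hb : b = 0.
  case: (eqVneq b 0) => // nb; exfalso.
  have hw' : w = ratr (- a / b).
    have Hb : ratr b != 0 :> algC by rewrite fmorph_eq0.
    have Hbw : ratr b * w = - ratr a by rewrite -[ratr b * w](addKr (ratr a)) H addr0.
    rewrite -[w](mulKf Hb) Hbw rmorphM rmorphN fmorphV /=.
    by rewrite mulrC.
  move: hw; rewrite hw' -rmorphXn => /eqP; rewrite -rmorphN (inj_eq (fmorph_inj _)) => /eqP E.
  have : 0 <= (- a / b) ^+ 2 by rewrite sqr_ge0.
  rewrite E oppr_ge0 => H2. by move: hD; rewrite ltNge H2.
split=> //. by move: H; rewrite hb CratrE mul0r addr0 => /eqP; rewrite fmorph_eq0 => /eqP.
Qed.

Lemma coord_eq (D : rat) (hD : 0 < D) (w : algC) (hw : w ^+ 2 = - ratr D)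
  (a b a' b' : rat) : ratr a + ratr b * w = ratr a' + ratr b' * w -> a = a' /\ b = b'.
Proof.
move=> H.
have [h1 h2] : a - a' = 0 /\ b - b' = 0.
  apply: (coord0 hD hw). rewrite !rmorphB /= mulrBl.
  by rewrite addrACA H -addrACA !subrr addr0.
by split; apply/eqP; rewrite -subr_eq0; apply/eqP.
Qed.

Lemma iota0 w iota : is_embedding w iota -> iota 0 = 0.
Proof.
case=> _ [hA _].
have K0 : inK w 0 by exists 0, 0; rewrite !CratrE mul0r addr0.
have := hA 0 0 K0 K0; rewrite addr0 => /(congr1 (fun M => M - iota 0)).
by rewrite subrr addrK.
Qed.

Lemma inK_rat w r : inK w (ratr r).
Proof. by exists r, 0; rewrite CratrE mul0r addr0. Qed.

Lemma iota_rat w iota : is_embedding w iota -> forall r, iota (ratr r) = r%:M.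
Proof.
move=> E; have [h1 [hA hM]] := E.
have hN : forall n : nat, iota n%:R = n%:R%:M.
  elim=> [|n IH]; first by rewrite (iota0 E) raddf0.
  have Kn : inK w n%:R by rewrite -(rmorph_nat ratr); apply: inK_rat.
  have K1 : inK w 1 by rewrite -(rmorph1 ratr); apply: inK_rat.
  by rewrite -natr1 (hA _ _ Kn K1) IH h1; apply/matrixP => i j; rewrite !mxE; case: (i == j) => /=; rewrite ?mulr1n ?mulr0n ?addr0 // natr1.
have hZ : forall z : int, iota z%:~R = z%:~R%:M.
  case=> k; first exact: hN k.
  rewrite !NegzE !mulrNz. set n := k.+1.
  have Kn : inK w n%:R by rewrite -(rmorph_nat ratr); apply: inK_rat.
  have KN : inK w (- n%:R) by rewrite -(rmorph_nat ratr) -rmorphN; apply: inK_rat.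
  have := hA _ _ KN Kn; rewrite addNr (iota0 E) hN => H0.
  rewrite -[iota _](addrK (n%:R%:M)) -H0 sub0r.
  by apply/matrixP=> i j; rewrite !mxE mulNrn.
move=> r; rewrite -[r]divq_num_den.
set m := numq r; set d := denq r.
have hd : d%:~R != 0 :> rat by rewrite intr_eq0 denq_neq0.
have hdC : d%:~R != 0 :> algC by rewrite intr_eq0 denq_neq0.
have eqX : d%:~R * ratr (m%:~R / d%:~R) = m%:~R :> algC.
  by rewrite rmorphM /= fmorphV !rmorph_int mulrCA mulfV // mulr1.
have Kd : inK w d%:~R by rewrite -(rmorph_int ratr); apply: inK_rat.
have := hM (d%:~R) (ratr (m%:~R / d%:~R)) Kd (inK_rat _ _).
rewrite eqX !hZ => Hm.
by rewrite [in RHS]mulrC scalar_mxM Hm mulmxA -scalar_mxM mulVf // mul1mx.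
Qed.

Lemma ord2_cases (i : 'I_2) : i = ord0 \/ i = ord_max.
Proof. by case: i => [[|[|]]] //= H; [left|right]; apply/val_inj. Qed.

Lemma int_mxP (g : 'M[rat]_2) : int_mx g <->
  [/\ mxa g \is a Num.int, mxb g \is a Num.int, mxc g \is a Num.int & mxd g \is a Num.int].
Proof.
split; first by move=> H; split; apply: H.
case=> ha hb hc hd i j.
by case: (ord2_cases i) => ->; case: (ord2_cases j) => ->.
Qed.

Lemma lift00 : lift ord0 ord0 = ord_max :> 'I_2.
Proof. by apply/val_inj. Qed.

Lemma mxa_mul (A B : 'M[rat]_2) : mxa (A *m B) = mxa A * mxa B + mxb A * mxc B.
Proof. by rewrite /mxa /mxb /mxc mxE !big_ord_recl big_ord0 addr0 lift00. Qed.
Lemma mxb_mul (A B : 'M[rat]_2) : mxb (A *m B) = mxa A * mxb B + mxb A * mxd B.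
Proof. by rewrite /mxa /mxb /mxd mxE !big_ord_recl big_ord0 addr0 lift00. Qed.
Lemma mxc_mul (A B : 'M[rat]_2) : mxc (A *m B) = mxc A * mxa B + mxd A * mxc B.
Proof. by rewrite /mxa /mxc /mxd mxE !big_ord_recl big_ord0 addr0 lift00. Qed.
Lemma mxd_mul (A B : 'M[rat]_2) : mxd (A *m B) = mxc A * mxb B + mxd A * mxd B.
Proof. by rewrite /mxb /mxc /mxd mxE !big_ord_recl big_ord0 addr0 lift00. Qed.

Lemma mx_lin (r s : rat) (A : 'M[rat]_2) :
  [/\ mxa (r%:M + s *: A) = r + s * mxa A, mxb (r%:M + s *: A) = s * mxb A,
      mxc (r%:M + s *: A) = s * mxc A & mxd (r%:M + s *: A) = r + s * mxd A].
Proof. by split; rewrite /mxa /mxb /mxc /mxd !mxE /= ?mulr1n ?mulr0n ?add0r. Qed.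

Lemma mx_scal (r : rat) : [/\ mxa (r%:M : 'M_2) = r, mxb (r%:M : 'M_2) = 0,
   mxc (r%:M : 'M_2) = 0 & mxd (r%:M : 'M_2) = r].
Proof. by split; rewrite /mxa /mxb /mxc /mxd !mxE /= ?mulr1n ?mulr0n. Qed.

Lemma inK_w w : inK w w.
Proof. by exists 0, 1; rewrite !CratrE add0r mul1r. Qed.

Lemma iota_w_shape (D : rat) (hD : 0 < D) (w : algC) (hw : w ^+ 2 = - ratr D)
  iota (hiota : is_embedding w iota) (p q : rat) (hq : q != 0)
  (hfix : moebius_fixes (iota w) (ratr p + ratr q * w)) :
  exists cw : rat, (cw * q) ^+ 2 = 1 /\
  [/\ mxa (iota w) = cw * p, mxb (iota w) = - (cw * (p ^+ 2 + q ^+ 2 * D)),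
      mxc (iota w) = cw & mxd (iota w) = - (cw * p)].
Proof.
have [h1 [hA hM]] := hiota.
set A := iota w in hfix *.
set a := mxa A in hfix *; set b := mxb A in hfix *.
set c := mxc A in hfix *; set d := mxd A in hfix *.
case: hfix => hden heq.
have hw' : ratr D = - w ^+ 2 by rewrite hw opprK.
have E1 : ratr a * (ratr p + ratr q * w) + ratr b - (ratr p + ratr q * w) *
    (ratr c * (ratr p + ratr q * w) + ratr d) = 0.
  by have := congr1 (fun z => z * (ratr c * (ratr p + ratr q * w) + ratr d)) heq; rewrite /= divfK // => ->; rewrite subrr.
have [Hal Hbe] : a * p + b - c * (p ^+ 2 - q ^+ 2 * D) - d * p = 0 /\
                 a * q - 2 * c * p * q - d * q = 0.
  apply: (coord0 hD hw); rewrite -[RHS]E1 !CratrE /= hw'; ring.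
have sq : A *m A = (- D)%:M.
  rewrite /A -(hM _ _ (inK_w w) (inK_w w)) -expr2 hw -rmorphN.
  exact: (iota_rat hiota).
have Hc : c * a + d * c = 0 by rewrite /c /a /d -mxc_mul sq; case: (mx_scal (- D)).
have Hd : c * b + d * d = - D by rewrite /c /b /d -mxd_mul sq; case: (mx_scal (- D)).
have c0 : c != 0.
  apply/eqP => c0; move: Hd; rewrite c0 mul0r add0r => Hd.
  have : 0 <= d * d by rewrite -expr2 sqr_ge0.
  rewrite Hd; lra.
have had : a = - d.
  move/eqP: Hc; rewrite (mulrC d) -mulrDr mulf_eq0 (negbTE c0) /= addr_eq0 => /eqP //.
have hd : d = - c * p.
  have : q * (a - 2 * c * p - d) = 0 by rewrite -Hbe; ring.
  move/eqP; rewrite mulf_eq0 (negbTE hq) /= => /eqP H4; lra.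
have ha : a = c * p by rewrite had hd; ring.
have hb : b = - (c * (p ^+ 2 + q ^+ 2 * D)) by nra.
exists c; split; last by split => //; rewrite hd; ring.
move: Hd; rewrite hb hd => Hd.
have : D * ((c * q) ^+ 2 - 1) = 0 by nra.
move/eqP; rewrite mulf_eq0 gt_eqF //= subr_eq0 => /eqP //.
Qed.

Lemma Aint_quad (x : algC) (T Nn : rat) : T \is a Num.int -> Nn \is a Num.int ->
  x ^+ 2 - ratr T * x + ratr Nn = 0 -> x \in Aint.
Proof.
move=> /intrP [t ->] /intrP [k ->] H.
pose P : {poly algC} := 'X^2 + ((- t%:~R)%:P * 'X + (k%:~R)%:P).
apply: (@root_monic_Aint P).
- by rewrite /root /P !hornerE -H !rmorph_int /= mulNr.
- rewrite monicE /P lead_coefDl ?lead_coefXn // size_polyXn size_MXaddC.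
  by case: ifP => // _; rewrite ltnS ltnS size_polyC_leq1.
- apply/polyOverP => i; rewrite /P !(coefD, coefXn, coefMX, coefC).
  case: i => [|[|[|i]]] /=; rewrite ?add0r ?addr0 ?rpredN ?intr_int ?int_num0 ?int_num1 //.
Qed.

Lemma lat_coord (D : rat) (hD : 0 < D) (w : algC) (hw : w ^+ 2 = - ratr D)
  (al be : rat) (hbe : be != 0) (X Y : rat) :
  in_lat 1 (ratr al + ratr be * w) (ratr X + ratr Y * w) <->
  (Y / be) \is a Num.int /\ (X - al * (Y / be)) \is a Num.int.
Proof.
have hbeC : ratr be != 0 :> algC by rewrite fmorph_eq0.
split.
- case=> m [k H].
  have : ratr X + ratr Y * w = ratr (m%:~R + k%:~R * al) + ratr (k%:~R * be) * w.
    by rewrite H !CratrE /= ?rmorph_int; ring.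
  case/(coord_eq hD hw) => -> ->.
  split; first by rewrite mulfK // intr_int.
  by rewrite mulfK // (mulrC al) addrK intr_int.
- case=> /intrP [k Hk] /intrP [m Hm].
  exists m, k; rewrite -(rmorph_int ratr m) -(rmorph_int ratr k) -Hk -Hm !CratrE /=.
  by field.
Qed.

Lemma inEndP (w : algC) (u x : algC) :
  inEnd w (in_lat 1 u) x <-> inK w x /\ in_lat 1 u x /\ in_lat 1 u (x * u).
Proof.
split.
- case=> hK H; split=> //; split.
  + by rewrite -[x]mulr1; apply: H; exists 1, 0; rewrite mul1r mul0r addr0.
  + by apply: H; exists 0, 1; rewrite mul0r mul1r add0r.
- case=> hK [[m1 [k1 H1]] [m2 [k2 H2]]]; split=> // y [m [k ->]].
  exists (m * m1 + k * m2), (m * k1 + k * k2).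
  have -> : x * (m%:~R * 1 + k%:~R * u) = m%:~R * x + k%:~R * (x * u) by ring.
  rewrite {1}H1 H2 !rmorphD !rmorphM /=; ring.
Qed.

Lemma mulK (D : rat) (w : algC) (hw : w ^+ 2 = - ratr D) (a b c d : rat) :
  (ratr a + ratr b * w) * (ratr c + ratr d * w) =
  ratr (a * c - b * d * D) + ratr (a * d + b * c) * w.
Proof.
have hw' : ratr D = - w ^+ 2 by rewrite hw opprK.
by rewrite !CratrE /= hw'; ring.
Qed.

Lemma endL (D : rat) (hD : 0 < D) (w : algC) (hw : w ^+ 2 = - ratr D)
  (p q N : rat) (hq : q != 0) (hn : p ^+ 2 + q ^+ 2 * D != 0) (hN : N != 0) (r s : rat) :
  inEnd w (in_lat 1 (ratr (p / ((p ^+ 2 + q ^+ 2 * D) * N)) +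
                     ratr (- q / ((p ^+ 2 + q ^+ 2 * D) * N)) * w))
        (ratr r + ratr s * w) <->
  [/\ (s / q * (p ^+ 2 + q ^+ 2 * D) * N) \is a Num.int, (r + s / q * p) \is a Num.int,
      (r - s / q * p) \is a Num.int & (s / q / N) \is a Num.int].
Proof.
set n := p ^+ 2 + q ^+ 2 * D in hn *.
set al := p / (n * N); set be := - q / (n * N).
have hbe : be != 0 by rewrite /be mulf_neq0 ?oppr_eq0 ?invr_eq0 ?mulf_neq0.
rewrite inEndP (mulK hw) !(lat_coord hD hw _ hbe).
have e1 : s / be = - (s / q * n * N) by rewrite /be; field; rewrite hq hn hN.
have e2 : r - al * (s / be) = r + s / q * p by rewrite /al /be; field; rewrite hq hn hN.
have e3 : (r * be + s * al) / be = r - s / q * p by rewrite /al /be; field; rewrite hq hn hN.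
have e4 : r * al - s * be * D - al * ((r * be + s * al) / be) = s / q / N.
  by rewrite /al /be /n; field; rewrite hq hN -/n hn.

rewrite e4 e2 e3 e1 rpredN.
split.
- by case=> _ [[h1 h2] [h3 h4]].
- case=> h1 h2 h3 h4; split; last by [].
  by exists r, s.
Qed.

Lemma iota_lin (w : algC) iota (hiota : is_embedding w iota) (r s : rat) :
  iota (ratr r + ratr s * w) = r%:M + s *: iota w.
Proof.
have [h1 [hA hM]] := hiota.
have Ksw : inK w (ratr s * w) by exists 0, s; rewrite CratrE add0r.
rewrite (hA _ _ (inK_rat w r) Ksw) (hM _ _ (inK_rat w s) (inK_w w)).
by rewrite !(iota_rat hiota) mul_scalar_mx.
Qed.

Lemma cw_cases (cw q : rat) : (cw * q) ^+ 2 = 1 -> cw * q = 1 \/ cw * q = -1.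
Proof. by move/eqP; rewrite sqrf_eq1 => /orP [] /eqP; [left|right]. Qed.

Lemma int_iota (w : algC) iota (hiota : is_embedding w iota) (p q D cw : rat)
  (hq : q != 0) (hcq : (cw * q) ^+ 2 = 1)
  (ha : mxa (iota w) = cw * p) (hb : mxb (iota w) = - (cw * (p ^+ 2 + q ^+ 2 * D)))
  (hc : mxc (iota w) = cw) (hd : mxd (iota w) = - (cw * p)) (r s : rat) :
  int_mx (iota (ratr r + ratr s * w)) <->
  [/\ (s / q * (p ^+ 2 + q ^+ 2 * D)) \is a Num.int, (r + s / q * p) \is a Num.int,
      (r - s / q * p) \is a Num.int & (s / q) \is a Num.int].
Proof.
rewrite (iota_lin hiota) int_mxP.
have [-> -> -> ->] := mx_lin r s (iota w).
rewrite ha hb hc hd.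
have hcw : cw = (cw * q) / q by rewrite mulfK.
case: (cw_cases hcq) => e; rewrite hcw e.
- have -> : r + s * (1 / q * p) = r + s / q * p by ring.
  have -> : s * - (1 / q * (p ^+ 2 + q ^+ 2 * D)) = - (s / q * (p ^+ 2 + q ^+ 2 * D)) by ring.
  have -> : s * (1 / q) = s / q by ring.
  have -> : r + s * - (1 / q * p) = r - s / q * p by ring.
  rewrite rpredN; split; case=> *; by split.
- have -> : r + s * (-1 / q * p) = r - s / q * p by ring.
  have -> : s * - (-1 / q * (p ^+ 2 + q ^+ 2 * D)) = s / q * (p ^+ 2 + q ^+ 2 * D) by ring.
  have -> : s * (-1 / q) = - (s / q) by ring.
  have -> : r + s * - (-1 / q * p) = r + s / q * p by ring.
  rewrite rpredN; split; case=> *; by split.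
Qed.

Lemma inOc_inK (w : algC) (c : nat) x : inOc w c x -> inK w x.
Proof.
case=> m [y [[[a [b ->]] _] ->]].
exists (m%:~R + c%:R * a), (c%:R * b); rewrite !CratrE /=; ring.
Qed.

Lemma inK_lin (w : algC) (u v : int) y z : inK w y -> inK w z -> inK w (u%:~R * y + v%:~R * z).
Proof.
case=> a [b ->] [a' [b' ->]].
exists (u%:~R * a + v%:~R * a'), (u%:~R * b + v%:~R * b'); rewrite !CratrE /=; ring.
Qed.

Lemma inK_rat_w (w : algC) (r s : rat) : inK w (ratr r + ratr s * w).
Proof. by exists r, s. Qed.

Theorem lemma2p4
  (D : rat) (hD : 0 < D) (w : algC) (hw : w ^+ 2 = - ratr D)
  (N0 N1 c : nat) (hN0 : (0 < N0)%N) (hN1 : (0 < N1)%N) (hc : (0 < c)%N)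
  (hcN : coprime c (N0 * N1 ^ 2))
  (iota : algC -> 'M[rat]_2) (hiota : is_embedding w iota)
  (hZ : forall x, inK w x -> (int_mx (iota x) <-> inOc w c x))
  (hR0 : forall x, inK w x -> (inR0 N0 (iota x) <-> inOc w c x))
  (h0 : algC) (hh0K : inK w h0) (hh0 : 0 < 'Im h0)
  (hfix : forall x, inK w x -> x != 0 -> moebius_fixes (iota x) h0) :
  (forall x, inEnd w (in_lat 1 h0^-1) x <-> inOc w c x) /\
  (forall x, inEnd w (in_lat 1 (N0%:R^-1 * h0^-1)) x <-> inOc w c x).
Proof.
have hw' : ratr D = - w ^+ 2 by rewrite hw opprK.
case: hh0K => p [q Hh0].
have hq : q != 0.
  apply/eqP => q0; move: hh0; rewrite Hh0 q0 CratrE mul0r addr0.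
  by rewrite (Creal_ImP _ (Creal_Crat (Crat_rat p))) ltxx.
have hw0 : w != 0.
  apply/eqP => w0.
  have : ratr D = 0 :> algC by rewrite hw' w0 expr2 mul0r oppr0.
  by move/eqP; rewrite fmorph_eq0 gt_eqF.
have hfw := hfix w (inK_w w) hw0; rewrite Hh0 in hfw.
have [cw [hcq [ea eb ec ed]]] := iota_w_shape hD hw hiota hq hfw.
have hn : p ^+ 2 + q ^+ 2 * D != 0.
  have q2 : 0 < q ^+ 2 by rewrite lt_def sqr_ge0 expf_neq0 ?andbT.
  have : 0 < p ^+ 2 + q ^+ 2 * D by apply: ltr_wpDl; [exact: sqr_ge0 | exact: mulr_gt0].
  by move=> /gt_eqF ->.
have h0nz : h0 != 0.
  by apply/eqP => h00; move: hh0; rewrite h00 (Creal_ImP _ (rpred0 _)) ltxx.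
have hinv : forall N : rat, N != 0 -> ratr N^-1 * h0^-1 =
    ratr (p / ((p ^+ 2 + q ^+ 2 * D) * N)) + ratr (- q / ((p ^+ 2 + q ^+ 2 * D) * N)) * w.
  move=> N hN.
  apply: (mulfI h0nz); rewrite mulrCA mulfV // mulr1 Hh0 (mulK hw).
  have -> : p * (p / ((p ^+ 2 + q ^+ 2 * D) * N)) - q * (- q / ((p ^+ 2 + q ^+ 2 * D) * N)) * D
     = N^-1 by field; rewrite hN hn.
  have -> : p * (- q / ((p ^+ 2 + q ^+ 2 * D) * N)) + q * (p / ((p ^+ 2 + q ^+ 2 * D) * N)) = 0
     by field; rewrite hN hn.
  by rewrite rmorph0 mul0r addr0.
have hN0r : N0%:R != 0 :> rat by rewrite pnatr_eq0 -lt0n.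
have hinv1 : h0^-1 = ratr (p / ((p ^+ 2 + q ^+ 2 * D) * 1)) + ratr (- q / ((p ^+ 2 + q ^+ 2 * D) * 1)) * w.
  by rewrite -hinv ?oner_neq0 // invr1 rmorph1 mul1r.
have hinv2 : N0%:R^-1 * h0^-1 = ratr (p / ((p ^+ 2 + q ^+ 2 * D) * N0%:R)) + ratr (- q / ((p ^+ 2 + q ^+ 2 * D) * N0%:R)) * w.
  by rewrite -hinv // fmorphV rmorph_nat.
have hIZ := int_iota hiota hq hcq ea eb ec ed.
have hcq' : (cw * q) \is a Num.int by case: (cw_cases hcq) => ->; rewrite ?rpredN int_num1.
split=> x.
- split.
  + move=> H; case: (H) => -[r [s Hx]] _; rewrite Hx in H *.
    move: H; rewrite hinv1 (endL hD hw hq hn (oner_neq0 _)) mulr1 divr1 => H.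
    by apply/(hZ _ (inK_rat_w _ _ _))/hIZ.
  + move=> H; have [r [s Hx]] := inOc_inK H; rewrite Hx in H *.
    move/(hZ _ (inK_rat_w _ _ _))/hIZ: H => H.
    by rewrite hinv1 (endL hD hw hq hn (oner_neq0 _)) mulr1 divr1.
- split.
  + move=> H; case: (H) => -[r [s Hx]] _; rewrite Hx in H *.
    move: H; rewrite hinv2 (endL hD hw hq hn hN0r) => -[h1 h2 h3 h4].
    set n := p ^+ 2 + q ^+ 2 * D in h1 h2 h3 h4 hIZ.
    have KN : inOc w c (ratr (N0%:R * r) + ratr (N0%:R * s) * w).
      apply/(hZ _ (inK_rat_w _ _ _))/hIZ.
      have -> : N0%:R * s / q * n = s / q * n * N0%:R by ring.
      have -> : N0%:R * r + N0%:R * s / q * p = N0%:R * (r + s / q * p) by ring.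
      have -> : N0%:R * r - N0%:R * s / q * p = N0%:R * (r - s / q * p) by ring.
      have -> : N0%:R * s / q = N0%:R * N0%:R * (s / q / N0%:R) by field; rewrite hN0r.
      by split => //; apply: rpredM => //; rewrite ?natr_int //; apply: rpredM; exact: natr_int.
    case: KN => m0 [y0 [[Ky0 Ay0] E0]].
    have E : N0%:R * (ratr r + ratr s * w) = m0%:~R + c%:R * y0.
      by rewrite -E0 !CratrE /=; ring.
    have Ax : ratr r + ratr s * w \in Aint.
      have eT : (r + s / q * p) + (r - s / q * p) = 2 * r by ring.
      have eN : (r + s / q * p) * (r - s / q * p) + (s / q / N0%:R) * (s / q * n * N0%:R)
         = r ^+ 2 + s ^+ 2 * D by rewrite /n; field; rewrite hq hN0r.
      apply: (@Aint_quad _ (2 * r) (r ^+ 2 + s ^+ 2 * D)).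
      * by rewrite -eT; apply: rpredD.
      * by rewrite -eN; apply: rpredD; apply: rpredM.
      * by rewrite !CratrE /= hw'; ring.
    have cop : coprime c N0 by move: hcN; rewrite coprimeMr => /andP [].
    have [u [v Bez]] := Bezoutz (N0%:Z) (c%:Z).
    have Bez' : u%:~R * N0%:R + v%:~R * c%:R = 1 :> algC.
      have : gcdz N0%:Z c%:Z = 1%N by apply/eqP; rewrite coprime_sym in cop; exact: cop.
      move: Bez => /(congr1 (fun z : int => z%:~R : algC)); rewrite !rmorphD !rmorphM /= => ->.
      by move=> ->.
    exists (u * m0), (u%:~R * y0 + v%:~R * (ratr r + ratr s * w)); split.
      split; first by apply: inK_lin => //; apply: inK_rat_w.
      by apply: rpredD; apply: rpredM; rewrite ?Aint_int.
    set X := ratr r + ratr s * w in E Ax *.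
    apply/eqP; rewrite -subr_eq0.
    have -> : X - ((u * m0)%:~R + c%:R * (u%:~R * y0 + v%:~R * X)) =
       - (u%:~R * (m0%:~R + c%:R * y0 - N0%:R * X)) - X * (u%:~R * N0%:R + v%:~R * c%:R - 1).
      by rewrite rmorphM /=; ring.
    by rewrite -E Bez' !subrr !mulr0 oppr0 addr0.
  + move=> H; have [r [s Hx]] := inOc_inK H; rewrite Hx in H *.
    have [_ [k Hk]] := (hR0 _ (inK_rat_w _ _ _)).2 H.
    move/(hZ _ (inK_rat_w _ _ _))/hIZ: H => -[i1 i2 i3 i4].
    rewrite hinv2 (endL hD hw hq hn hN0r); split => //.
    * by apply: rpredM => //; exact: natr_int.
    * move: Hk; rewrite (iota_lin hiota); have [_ _ -> _] := mx_lin r s (iota w).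
      rewrite ec => Hk.
      have -> : s / q / N0%:R = (s * cw) / N0%:R * (cw * q).
        have e : s / q / N0%:R = s / q / N0%:R * (cw * q) ^+ 2 by rewrite hcq mulr1.
        by rewrite e; field; rewrite hq hN0r.
      rewrite Hk rmorphM /= -pmulrn [N0%:R * _]mulrC mulfK //.
      by apply: rpredM => //; exact: intr_int.
Qed.
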